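(* Let $L$ be a localization functor on the category of abelian groups and $D$ an abelian group. If $\bigoplus_\kappa D$ is $L$-local for some infinite cardinal $\kappa$, then $\bigoplus_\kappa D$ is $L$-local for every infinite cardinal $\kappa$.
   Context: All groups are abelian. A localization is a functor $L:\mathcal{Ab}\to\mathcal{Ab}$ with a natural transformation $a:\mathrm{Id}\to L$ such that for every group $X$ we have $a_{LX}=La_X$ and $a_{LX}:LX\to LLX$ is an isomorphism. A group $X$ is $L$-local if $a_X$ is an isomorphism. *)

(* Defs.v *)
(* Abelian groups are modelled as [zmodType]s, group
   homomorphisms as [{additive A -> B}]. *)
From HB Require Import structures.
From mathcomp Require Import all_boot all_order all_algebra.
From Stdlib Require Import Classical ClassicalEpsilon FunctionalExtensionality
  ProofIrrelevance List.
Set Implicit Arguments. Unset Strict Implicit. Unset Printing Implicit Defensive.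
Import GRing.Theory.
Local Open Scope ring_scope.

Record localization := Localization {
  Lobj : zmodType -> zmodType;
  Lmap : forall A B : zmodType, {additive A -> B} -> {additive Lobj A -> Lobj B};
  Lmap_id : forall A : zmodType, Lmap (A:=A) (B:=A) idfun =1 idfun;
  Lmap_comp : forall (A B C : zmodType) (f : {additive A -> B}) (g : {additive B -> C}),
      Lmap (g \o f) =1 Lmap g \o Lmap f;
  La : forall A : zmodType, {additive A -> Lobj A};
  La_natural : forall (A B : zmodType) (f : {additive A -> B}),
      Lmap f \o La A =1 La B \o f;
  La_idem : forall A : zmodType, La (Lobj A) =1 Lmap (La A);
  La_iso : forall A : zmodType, bijective (La (Lobj A))
}.

Definition is_local (L : localization) (X : zmodType) : Prop :=
  bijective (La L X).

(* An infinite index set (a representative of an infinite cardinal). *)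
Definition infinite_type (I : Type) : Prop :=
  ~ exists s : list I, forall i : I, In i s.

(* Direct sum of I copies of D: finitely supported functions I -> D.   *)
Section DSum.
Variables (I : Type) (D : zmodType).

Definition finsupp (f : I -> D) : Prop :=
  exists s : list I, forall i, ~ In i s -> f i = 0.

Record dsum := DSum { dsum_fun :> I -> D; dsum_fin : finsupp dsum_fun }.

Lemma dsum_ext (x y : dsum) : (forall i, x i = y i) -> x = y.
Proof.
case: x => f hf; case: y => g hg /= H.
have E : f = g by apply: functional_extensionality.
subst g; by rewrite (proof_irrelevance _ hf hg).
Qed.

Definition dsum_eqb (x y : dsum) : bool :=
  if excluded_middle_informative (x = y) then true else false.
Lemma dsum_eqP : Equality.axiom dsum_eqb.
Proof.
move=> x y; rewrite /dsum_eqb.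
case: excluded_middle_informative => h; [exact: ReflectT | exact: ReflectF].
Qed.
HB.instance Definition _ := hasDecEq.Build dsum dsum_eqP.

Definition dsum_find (P : pred dsum) (n : nat) : option dsum :=
  match excluded_middle_informative (exists x, P x) with
  | left h => Some (proj1_sig (constructive_indefinite_description _ h))
  | right _ => None
  end.
Lemma dsum_find_some P n x : dsum_find P n = Some x -> P x.
Proof.
rewrite /dsum_find; case: excluded_middle_informative => // h [<-].
exact: proj2_sig (constructive_indefinite_description _ h).
Qed.
Lemma dsum_find_ex (P : pred dsum) : (exists x, P x) -> exists n, dsum_find P n.
Proof.
move=> h; exists 0%N; rewrite /dsum_find.
by case: excluded_middle_informative.
Qed.
Lemma dsum_find_ext (P Q : pred dsum) : P =1 Q -> dsum_find P =1 dsum_find Q.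
Proof.
move=> H n; have E : P = Q by apply: functional_extensionality.
by subst.
Qed.
HB.instance Definition _ := hasChoice.Build dsum dsum_find_some dsum_find_ex dsum_find_ext.

Lemma finsupp0 : finsupp (fun _ => 0).
Proof. by exists nil. Qed.
Lemma finsuppN (x : dsum) : finsupp (fun i => - x i).
Proof.
case: x => f [s hs]; exists s => i hi /=; by rewrite hs // oppr0.
Qed.
Lemma finsuppD (x y : dsum) : finsupp (fun i => x i + y i).
Proof.
case: x => f [s hs]; case: y => g [t ht]; exists (s ++ t) => i hi /=.
rewrite hs ?ht ?addr0 // => H; apply: hi; apply: in_or_app; tauto.
Qed.

Definition dsum0 := DSum finsupp0.
Definition dsumN x := DSum (finsuppN x).
Definition dsumD x y := DSum (finsuppD x y).

Lemma dsumA : associative dsumD.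
Proof. by move=> x y z; apply: dsum_ext => i /=; rewrite addrA. Qed.
Lemma dsumC : commutative dsumD.
Proof. by move=> x y; apply: dsum_ext => i /=; rewrite addrC. Qed.
Lemma dsum0l : left_id dsum0 dsumD.
Proof. by move=> x; apply: dsum_ext => i /=; rewrite add0r. Qed.
Lemma dsumNl : left_inverse dsum0 dsumN dsumD.
Proof. by move=> x; apply: dsum_ext => i /=; rewrite addNr. Qed.
HB.instance Definition _ := GRing.isZmodule.Build dsum dsumA dsumC dsum0l dsumNl.

End DSum.

(* Main.v *)
Require Import Defs.
From HB Require Import structures.
From mathcomp Require Import all_boot all_order all_algebra.
From Stdlib Require Import Classical ClassicalEpsilon FunctionalExtensionality
  ProofIrrelevance List Lia.
Set Implicit Arguments. Unset Strict Implicit.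
Import GRing.Theory.
Local Open Scope ring_scope.

Definition mkadd (A B : zmodType) (f : A -> B) (pf : {morph f : x y / x - y}) : {additive A -> B} :=
  HB.pack f (GRing.isZmodMorphism.Build A B f pf).

Lemma add_ext (A B : zmodType) (f g : {additive A -> B}) : f =1 g -> f = g.
Proof.
case: f => f cf; case: g => g cg /= H.
have E : f = g := functional_extensionality _ _ H.
subst g; case: cf => [[pf]]; case: cg => [[pg]].
by rewrite (proof_irrelevance _ pf pg).
Qed.

Lemma Lmap_ext (L : localization) (A B : zmodType) (f g : {additive A -> B}) :
  f =1 g -> Lmap L f =1 Lmap L g.
Proof. by move=> H; rewrite (add_ext H). Qed.

Lemma loc_uniq (L : localization) (X Y : zmodType) (HY : is_local L Y)
  (f1 f2 : {additive Lobj L X -> Y}) :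
  (forall x, f1 (La L X x) = f2 (La L X x)) -> f1 =1 f2.
Proof.
move=> H z; apply: (bij_inj HY).
have N1 := La_natural L f1 z; have N2 := La_natural L f2 z.
simpl in N1, N2; rewrite -N1 -N2 !La_idem.
have C1 := Lmap_comp (l:=L) (La L X) f1 z; have C2 := Lmap_comp (l:=L) (La L X) f2 z.
simpl in C1, C2; rewrite -C1 -C2.
by apply: Lmap_ext => x /=.
Qed.

Lemma inv_additive (A B : zmodType) (a : {additive A -> B}) (ai : B -> A) :
  cancel a ai -> cancel ai a -> {morph ai : x y / x - y}.
Proof.
move=> K1 K2 x y; rewrite -{1}(K2 x) -{1}(K2 y) -raddfB; exact: K1.
Qed.

Definition loc_ext (L : localization) (X Y : zmodType) (ai : Lobj L Y -> Y)
  (K1 : cancel (La L Y) ai) (K2 : cancel ai (La L Y)) (f : {additive X -> Y}) :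
  {f' : {additive Lobj L X -> Y} | forall x, f' (La L X x) = f x}.
Proof.
have pf : {morph (fun z => ai (Lmap L f z)) : x y / x - y}.
  by move=> x y /=; rewrite raddfB; exact: (inv_additive K1 K2).
exists (mkadd pf) => x /=.
have N := La_natural L f x; simpl in N; by rewrite N K1.
Defined.

Lemma retract_local (L : localization) (X Y : zmodType) (HX : is_local L X)
  (i : {additive Y -> X}) (r : {additive X -> Y}) :
  (forall y, r (i y) = y) -> is_local L Y.
Proof.
move=> ri; case: HX => ai K1 K2.
exists (fun z => r (ai (Lmap L i z))).
  move=> y /=; have N := La_natural L i y; simpl in N; by rewrite N K1 ri.
move=> z /=; have N := La_natural L r (ai (Lmap L i z)); simpl in N.
rewrite -N K2; have C := Lmap_comp (l:=L) i r z; simpl in C; rewrite -C.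
have E : (r \o i : {additive Y -> Y}) =1 (idfun : {additive Y -> Y}) by move=> y /=; exact: ri.
by rewrite (Lmap_ext E) Lmap_id.
Qed.

Lemma inj_nat (T : Type) (P : T -> Prop) :
  (forall l : list T, exists t, P t /\ ~ In t l) ->
  exists e : nat -> T, injective e /\ forall n, P (e n).
Proof.
move=> H.
pose ch l := proj1_sig (constructive_indefinite_description _ (H l)).
have chP l : P (ch l) /\ ~ In (ch l) l := proj2_sig (constructive_indefinite_description _ (H l)).
pose pl := fix pl n := match n with 0%N => nil | S m => ch (pl m) :: pl m end.
have inpl : forall m n, (m < n)%N -> In (ch (pl m)) (pl n).
  move=> m; elim=> [//|n IH]; rewrite ltnS leq_eqVlt => /orP [/eqP->|h] /=.
    by left.
  by right; apply: IH.
exists (fun n => ch (pl n)); split; last by move=> n; case: (chP (pl n)).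
move=> m n /= E; case: (ltngtP m n) => // h.
  case: (chP (pl n)) => _ []; rewrite -E; exact: inpl.
case: (chP (pl m)) => _ []; rewrite E; exact: inpl.
Qed.

Lemma pigeon (T : Type) (c : nat -> T) (s : list T) :
  injective c -> (forall n, In (c n) s) -> False.
Proof.
move=> ic H.
have ND : NoDup (List.map c (List.seq 0 (S (length s)))).
  apply: NoDup_map_NoDup_ForallPairs; [move=> x y _ _; exact: ic | exact: seq_NoDup].
have I : incl (List.map c (List.seq 0 (S (length s)))) s.
  by move=> x /in_map_iff [n [<- _]].
have := NoDup_incl_length ND I.
rewrite length_map length_seq => ?; lia.
Qed.

Lemma finv_ex (T : Type) (c : nat -> T) : injective c ->
  exists ci : T -> option nat, (forall n, ci (c n) = Some n) /\
    (forall t n, ci t = Some n -> c n = t).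
Proof.
move=> ic.
exists (fun t => match excluded_middle_informative (exists n, c n = t) with
  | left h => Some (proj1_sig (constructive_indefinite_description _ h))
  | right _ => None end); split.
  move=> n; case: excluded_middle_informative => [h|[]]; last by exists n.
  congr Some; apply: ic; exact: proj2_sig (constructive_indefinite_description _ h).
move=> t n; case: excluded_middle_informative => // h [<-].
exact: proj2_sig (constructive_indefinite_description _ h).
Qed.

Lemma dsumBE (I : Type) (D : zmodType) (x y : dsum I D) i : (x - y) i = x i - y i.
Proof. by []. Qed.

Theorem corollary2 (L : localization) (D : zmodType) :
  (exists (K : Type), infinite_type K /\ is_local L (dsum K D)) ->
  forall (K : Type), infinite_type K -> is_local L (dsum K D).
Proof.
case=> J [infJ locJ] K infK.
have [c [ic _]] : exists c : nat -> J, injective c /\ forall n, (fun _ : J => True) (c n).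
  apply: (@inj_nat J (fun _ : J => True)) => l.
  apply: NNPP => H; apply: infJ; exists l => j; apply: NNPP => Hj.
  by apply: H; exists j.
have locD : is_local L D.
  have fs : forall d : D, finsupp (fun k : J =>
      if excluded_middle_informative (k = c 0%N) then d else 0).
    move=> d; exists [:: c 0%N] => k hk.
    case: excluded_middle_informative => // e; case: hk; subst; by left.
  have pfi : {morph (fun d : D => DSum (fs d)) : x y / x - y}.
    move=> x y; apply: dsum_ext => k /=.
    clear fs; destruct (excluded_middle_informative (k = c 0%N)) => /=; by rewrite ?subr0.
  have pfr : {morph (fun x : dsum J D => x (c 0%N)) : x y / x - y} by [].
  apply: (@retract_local L (dsum J D) D locJ (mkadd pfi) (mkadd pfr)) => d /=.
  by case: excluded_middle_informative.
set X := dsum K D.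
have [aiD KD1 KD2] := locD.
have [aiJ KJ1 KJ2] := locJ.
have pfp : forall i : K, {morph (fun x : X => x i) : x y / x - y} by [].
pose pp i := proj1_sig (loc_ext KD1 KD2 (mkadd (pfp i))).
have ppE i x : pp i (La L X x) = x i := proj2_sig (loc_ext KD1 KD2 (mkadd (pfp i))) x.
have fsg : forall z, finsupp (fun i => pp i z).
  move=> z; apply: NNPP => nfs.
  have [e [ie He]] : exists e : nat -> K, injective e /\ forall n, pp (e n) z <> 0.
    apply: (@inj_nat K (fun i => pp i z <> 0)) => l; apply: NNPP => H; apply: nfs; exists l => i hi.
    apply: NNPP => H2; apply: H; by exists i.
  have [ci [ci1 ci2]] := finv_ex ic.
  have [ei [ei1 ei2]] := finv_ex ie.
  pose hf (x : X) (k : J) : D := match ci k with Some n => x (e n) | None => 0 end.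
  have fsh : forall x : X, finsupp (hf x).
    case=> f [s hs]; exists (flat_map (fun i => match ei i with Some n => [:: c n] | None => nil end) s).
    move=> k hk; rewrite /hf; case E: (ci k) => [n|] //=.
    apply: hs => hin; apply: hk; apply/in_flat_map; exists (e n); split => //.
    by rewrite ei1 (ci2 _ _ E); left.
  have pfh : {morph (fun x : X => DSum (fsh x)) : x y / x - y}.
    move=> x y; apply: dsum_ext => k /=; rewrite /hf.
    by case: (ci k) => // ; rewrite subr0.
  pose h' := proj1_sig (loc_ext KJ1 KJ2 (mkadd pfh)).
  have h'E x : h' (La L X x) = DSum (fsh x) := proj2_sig (loc_ext KJ1 KJ2 (mkadd pfh)) x.
  have pfq : forall n, {morph (fun x : dsum J D => x (c n)) : x y / x - y} by [].
  have key : forall n, h' z (c n) = pp (e n) z.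
    move=> n.
    have := @loc_uniq L X D locD ((mkadd (pfq n)) \o h') (pp (e n)).
    move=> /(_ _ z) /= ->// x /=; rewrite h'E ppE /= /hf ci1 //.
  case: (dsum_fin (h' z)) => s hs.
  apply: (pigeon ic (s := s)) => n; apply: NNPP => hn.
  by apply: (He n); rewrite -key; apply: hs.
have pfg : {morph (fun z => DSum (fsg z) : X) : x y / x - y}.
  by move=> x y; apply: dsum_ext => i /=; rewrite raddfB.
apply: (@retract_local L (Lobj L X) X (La_iso L X) (La L X) (mkadd pfg)) => x /=.
by apply: dsum_ext => i /=; rewrite ppE.
Qed.
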